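(* Let $a, c \in \mathbb{N}$ and $b, d \in \mathbb{Z}$. (i) Suppose $a\neq c$. Then $\chi(G_{a,b,c,d}) \le \left\lceil \frac{\log \alpha\beta}{\log\alpha}\right\rceil$ for any real numbers $1<\alpha<\beta$ satisfying $R_{a,b,c,d}\subseteq (\beta^{-1},\alpha^{-1})\cup(\alpha,\beta)$. (ii) Suppose $a=c$. If there exists a prime $p$ with $v_p(a)>\max\{v_p(b),v_p(d)\}$ and $v_p(b)=v_p(d)$, then $\chi(G_{a,b,c,d})\le p^{v_p(b-d)}(p-1)$. (iii) Suppose $a=c$. If there exists a prime $p$ with $v_p(a)>\max\{v_p(b),v_p(d)\}$ and $v_p(b)\neq v_p(d)$, then $\chi(G_{a,b,c,d})=2$.
   Context: $\mathbb{N}=\{1,2,\dots\}$. For $a,c\in\mathbb{N}$, $b,d\in\mathbb{Z}$, $R_{a,b,c,d} := \left\{ \frac{an+b}{cn+d} : n \in \mathbb{N} \right\} \cap (\mathbb{Q}_{>0}\setminus\{1\})$. For non-empty $R\subseteq\mathbb{Q}_{>0}\setminus\{1\}$, $G(R)$ is the graph with vertex set $\mathbb{N}$ and edge set $\{\{m,n\}: m/n\in R\}$; $G_{a,b,c,d}:=G(R_{a,b,c,d})$. $\chi$ denotes chromatic number, $v_p$ the $p$-adic valuation (with $v_p(0)=\infty$). *)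

(* Defs.v *)
From HB Require Import structures.
From mathcomp Require Import all_boot all_order all_algebra.
From mathcomp Require Import reals exp.
Set Implicit Arguments. Unset Strict Implicit. Unset Printing Implicit Defensive.
Import Order.TTheory GRing.Theory Num.Theory.
Local Open Scope ring_scope.

Definition Rset (a : nat) (b : int) (c : nat) (d : int) (q : rat) : Prop :=
  (exists n : nat, (0 < n)%N /\ (c%:Z * n%:Z + d != 0) /\
     q = (a%:Z * n%:Z + b)%:~R / (c%:Z * n%:Z + d)%:~R)
  /\ 0 < q /\ q != 1.

Definition adj (R : rat -> Prop) (m n : nat) : Prop :=
  (0 < m)%N /\ (0 < n)%N /\ (R (m%:R / n%:R) \/ R (n%:R / m%:R)).

Definition colorable (R : rat -> Prop) (k : nat) : Prop :=
  exists f : nat -> 'I_k, forall m n, adj R m n -> f m <> f n.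

Definition G (a : nat) (b : int) (c : nat) (d : int) := Rset a b c d.

(* p-adic valuation on int, with v_p(0) = infinity (encoded as None). *)
Definition vp (p : nat) (z : int) : option nat :=
  if z == 0 then None else Some (logn p `|z|%N).

Definition vlt (x y : option nat) : bool :=
  match x, y with
  | Some m, Some n => (m < n)%N
  | Some _, None => true
  | None, _ => false
  end.

Definition vmax (x y : option nat) : option nat :=
  match x, y with
  | Some m, Some n => Some (maxn m n)
  | _, _ => None
  end.

Definition colorable_pow (R : rat -> Prop) (p : nat) (e : option nat) : Prop :=
  match e with
  | Some k => colorable R (p ^ k * (p - 1))
  | None => True
  end.

(* Main.v *)
Require Import Defs.
From HB Require Import structures.
From mathcomp Require Import all_boot all_order all_algebra.
From mathcomp Require Import reals exp.
From mathcomp Require Import zify ring lra.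
Import Order.TTheory GRing.Theory Num.Theory.
Local Open Scope ring_scope.

Lemma core_i (R:realType) (al be : R) (m n : nat): 1 < al -> al < be -> (0<m)%N -> (0<n)%N ->
  al < m%:R / n%:R < be ->
  exists2 D : nat, (0 < D < `|Num.ceil (ln(al*be)/ln al)|)%N &
   `|Num.floor (ln (m%:R : R) / ln al)|%N = (`|Num.floor (ln (n%:R:R) / ln al)| + D)%N.
Proof.
move=> al1 albe m0 n0 /andP[h1 h2].
have al0 : 0 < al by lra.
have be0 : 0 < be by lra.
have la0 : 0 < ln al by apply: ln_gt0.
have mR : (0:R) < m%:R by rewrite ltr0n.
have nR : (0:R) < n%:R by rewrite ltr0n.
have mnR : (0:R) < m%:R / n%:R by apply: divr_gt0.
have lnmn : ln (m%:R / n%:R) = ln (m%:R : R) - ln (n%:R:R).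
  by rewrite ln_div // posrE.
have e1 : ln al < ln (m%:R / n%:R) by rewrite ltr_ln // posrE.
have e2 : ln (m%:R / n%:R) < ln be by rewrite ltr_ln // posrE.
rewrite lnmn in e1 e2.
have hL : ln (al * be) / ln al = 1 + ln be / ln al.
  rewrite lnM ?posrE // mulrDl divff //; lra.
rewrite hL.
set X := ln (n%:R:R) / ln al.
set Y := ln (m%:R:R) / ln al.
have T1 : 1 < Y - X.
  rewrite /X /Y -mulrBl ltr_pdivlMr // mul1r //.
have T2 : Y - X < ln be / ln al.
  rewrite /X /Y -mulrBl ltr_pM2r ?invr_gt0 //.
have X0 : 0 <= X by rewrite /X divr_ge0 ?ln_ge0 ?ler1n // ltW.
have Y0 : 0 <= Y by rewrite /Y divr_ge0 ?ln_ge0 ?ler1n // ltW.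
have fX0 : 0 <= Num.floor X by rewrite floor_ge0.
have fY0 : 0 <= Num.floor Y by rewrite floor_ge0.
have := floor_itv X; have := floor_itv Y; have := ceil_ge (1 + ln be / ln al).
rewrite !intrD.
move=> c /andP[y1 y2] /andP[x1 x2].
have D0 : 0 < Num.floor Y - Num.floor X.
  rewrite -(ltr0z R) intrB; lra.
have D1 : Num.floor Y - Num.floor X < Num.ceil (1 + ln be / ln al).
  rewrite -(ltr_int R) intrB; lra.
have [u hu] : exists u : nat, Num.floor Y = u%:Z by exists `|Num.floor Y|%N; rewrite abszE ger0_norm.
have [v hv] : exists v : nat, Num.floor X = v%:Z by exists `|Num.floor X|%N; rewrite abszE ger0_norm.
have c0 : 0 <= Num.ceil (1 + ln be / ln al) by apply: le_trans (ltW D1); rewrite ltW.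
have [w hw] : exists w : nat, Num.ceil (1 + ln be / ln al) = w%:Z by exists `|Num.ceil (1 + ln be / ln al)|%N; rewrite abszE ger0_norm.
rewrite hu hv hw in D0 D1 *.
rewrite subr_gt0 ltz_nat in D0.
rewrite subzn in D1; last exact: ltnW D0.
rewrite ltz_nat in D1.
exists (u - v)%N; rewrite !absz_nat.
  by rewrite D1 subn_gt0 D0.
by rewrite subnKC // ltnW.
Qed.


Lemma modne (x D k : nat) : (0 < D < k)%N -> ((x + D) %% k)%N <> (x %% k)%N.
Proof.
case/andP=> D0 Dk /eqP; rewrite -{2}(addn0 x) eqn_modDl mod0n modn_small //.
by move/eqP=> E; rewrite E in D0.
Qed.

Lemma inv_itv (R : realType) (al be z : R) : 0 < al -> 0 < be -> 0 < z ->
  be^-1 < z < al^-1 -> al < z^-1 < be.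
Proof.
move=> a0 b0 z0 /andP[h1 h2]; apply/andP; split.
  by rewrite -(@ltf_pV2 _ (z^-1) al) ?invrK // posrE ?invr_gt0.
by rewrite -(@ltf_pV2 _ be (z^-1)) ?invrK // posrE ?invr_gt0.
Qed.

Lemma ratr_natdiv (R : realType) (x y : nat) : ratr (x%:R / y%:R : rat) = (x%:R / y%:R : R).
Proof. by rewrite fmorph_div !rmorph_nat. Qed.

Lemma part_i (a : nat) (b : int) (c : nat) (d : int) (R : realType) (alpha beta : R) :
  1 < alpha -> alpha < beta ->
       (forall q : rat, Rset a b c d q ->
          (beta^-1 < ratr q < alpha^-1) \/ (alpha < ratr q < beta)) ->
       colorable (G a b c d) `|Num.ceil (ln (alpha * beta) / ln alpha)|%N.
Proof.
move=> al1 albe H.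
have al0 : 0 < alpha by apply: lt_trans al1.
have be0 : 0 < beta by apply: lt_trans albe.
have L0 : 0 < ln (alpha * beta) / ln alpha.
  apply: divr_gt0; apply: ln_gt0 => //.
  by rewrite -[1]mulr1; apply: ltr_pM => //; apply: lt_trans albe.
have k0 : (0 < `|Num.ceil (ln (alpha * beta) / ln alpha)|)%N.
  rewrite absz_gt0 gt_eqF // -(ltr0z R).
  exact: lt_le_trans L0 (ceil_ge _).
set k := `|Num.ceil (ln (alpha * beta) / ln alpha)|%N in k0 *.
set g := fun n : nat => `|Num.floor (ln (n%:R:R) / ln alpha)|%N.
have key : forall x y : nat, (0 < x)%N -> (0 < y)%N -> Rset a b c d (x%:R / y%:R) ->
    (g x %% k)%N <> (g y %% k)%N.
  move=> x y x0 y0 /H; rewrite ratr_natdiv.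
  have xR : (0:R) < x%:R by rewrite ltr0n.
  have yR : (0:R) < y%:R by rewrite ltr0n.
  case=> hi.
    have := @inv_itv R _ _ _ al0 be0 (divr_gt0 xR yR) hi; rewrite invf_div => hi2.
    have [D hD E] := @core_i R _ _ _ _ al1 albe y0 x0 hi2.
    rewrite /g E => E2; exact: (@modne _ _ _ hD (esym E2)).
  have [D hD E] := @core_i R _ _ _ _ al1 albe x0 y0 hi.
  rewrite /g E => E2; exact: (@modne _ _ _ hD E2).
exists (fun n => Ordinal (ltn_pmod (g n) k0)).
move=> m n [m0 [n0 Hmn]] E; have /= E2 := congr1 val E.
case: Hmn => Hq.
  exact: key m n m0 n0 Hq E2.
exact: key n m n0 m0 Hq (esym E2).
Qed.

Lemma rset_eq a b d (x y : nat) : (0<y)%N -> Rset a b a d (x%:R / y%:R) ->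
  exists t : nat, [/\ a%:Z * t + b != 0, a%:Z*t + d != 0, b != d &
     x%:Z * (a%:Z*t+d) = y%:Z * (a%:Z*t+b)].
Proof.
move=> y0 [[t [t0 [hD hq]]] [q0 q1]].
have hB : a%:Z * t + b != 0.
  apply: contraTneq q0 => E; by rewrite hq E rmorph0 mul0r ltxx.
have hbd : b != d.
  apply: contraNneq q1 => E; by rewrite hq E divff // intr_eq0.
exists t; split => //.
move/eqP: hq; rewrite eqr_div ?intr_eq0 ?pnatr_eq0 -?lt0n // => /eqP E.
apply: (@intr_inj rat); rewrite !rmorphM /= [in RHS]mulrC; exact: E.
Qed.

Lemma edge_eq (a : nat) (b d : int) m n : adj (G a b a d) m n ->
  [/\ (0<m)%N, (0<n)%N & exists t : nat, [/\ a%:Z * t + b != 0, a%:Z*t + d != 0, b != d &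
   (m%:Z * (a%:Z*t+d) = n%:Z*(a%:Z*t+b)) \/ (n%:Z * (a%:Z*t+d) = m%:Z*(a%:Z*t+b))]].
Proof.
move=> [m0 [n0 [H|H]]]; split => //.
  have [t [h1 h2 h3 h4]] := @rset_eq a b d m n n0 H; exists t; split => //; by left.
have [t [h1 h2 h3 h4]] := @rset_eq a b d n m m0 H; exists t; split => //; by right.
Qed.
Lemma logn_eq (p n e : nat) : prime p -> (0 < n)%N -> (p ^ e %| n)%N -> ~~ (p ^ e.+1 %| n)%N ->
  logn p n = e.
Proof.
move=> pp n0; rewrite !pfactor_dvdn // => h1 h2.
by apply/eqP; rewrite eqn_leq h1 andbT -ltnS ltnNge.
Qed.

Lemma val_lin (p a t : nat) (b : int) : prime p -> b != 0 ->
  (logn p `|b| < logn p a)%N -> (0 < a)%N -> a%:Z * t + b != 0 ->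
  logn p `|a%:Z * t + b| = logn p `|b|.
Proof.
move=> pp b0 lt a0 z0.
set e := logn p `|b|.
have da : (p ^ e.+1 %| a)%N by rewrite pfactor_dvdn.
have db : (p ^ e %| `|b|)%N by apply: pfactor_dvdnn.
apply: logn_eq => //; first by rewrite absz_gt0.
  have : ((p ^ e)%:Z %| a%:Z * t + b)%Z.
    apply: rpredD; last exact: db.
    apply: dvdz_mulr => /=; apply: dvdn_trans da; exact: dvdn_exp2l (leqnSn e).
  by [].
apply/negP => H.
have : ((p ^ e.+1)%:Z %| (a%:Z * t + b) - a%:Z * t)%Z.
  apply: rpredD; first exact: H.
  by rewrite rpredN; apply: dvdz_mulr.
rewrite addrC addKr => /=; rewrite -topredE /= /dvdz absz_nat pfactor_dvdn ?absz_gt0 // ltnn.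
by [].
Qed.

Lemma extract (p a : nat) (b d : int) : (0 < a)%N ->
  vlt (vmax (vp p b) (vp p d)) (vp p a%:Z) ->
  [/\ b != 0, d != 0, (logn p `|b| < logn p a)%N & (logn p `|d| < logn p a)%N].
Proof.
move=> a0; rewrite /vlt /vmax /vp.
have -> : (a%:Z == 0) = false by apply/negbTE; rewrite eqz_nat -lt0n.
case: eqP => // b0; case: eqP => // d0.
by rewrite gtn_max => /andP[h1 h2]; split => //; apply/eqP.
Qed.

Lemma edge_logn p a b d m n (t : nat) : prime p -> (0<a)%N -> b != 0 -> d != 0 ->
  (logn p `|b| < logn p a)%N -> (logn p `|d| < logn p a)%N -> (0<m)%N -> (0<n)%N ->
  a%:Z * t + b != 0 -> a%:Z * t + d != 0 ->
  m%:Z*(a%:Z * t + d) = n%:Z*(a%:Z * t + b) ->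
  (logn p m + logn p `|d| = logn p n + logn p `|b|)%N.
Proof.
move=> pp a0 b0 d0 hb hd m0 n0 hB hD E.
have := congr1 absz E; rewrite !abszM !absz_nat => E'.
have := congr1 (logn p) E'; rewrite !lognM ?absz_gt0 //.
by rewrite !val_lin.
Qed.

Lemma parity_flip (x k : nat) : (0<k)%N -> ((x + k) %/ k %% 2)%N <> (x %/ k %% 2)%N.
Proof. move=> k0; rewrite divnDr ?dvdnn // divnn k0 !modn2 addn1 /=; by case: (odd _). Qed.

Lemma shift (x y eb ed : nat) : eb <> ed -> (x + ed = y + eb)%N ->
  x = (y + (eb - ed + (ed - eb)))%N \/ y = (x + (eb - ed + (ed - eb)))%N.
Proof. move=> h1 h2. lia. Qed.

Lemma edge_exists (a : nat) (b d : int) : (0<a)%N -> b != d -> exists m n, adj (G a b a d) m n.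
Proof.
move=> a0 bd.
set t := (`|b| + `|d| + 1)%N.
have ht : t%:Z = `|b| + `|d| + 1 by rewrite /t !PoszD !abszE.
have hat : t%:Z <= a%:Z * t%:Z by apply: ler_peMl => //; rewrite lez_nat.
have nb : - b <= `|b| by rewrite -normrN ler_norm.
have nd : - d <= `|d| by rewrite -normrN ler_norm.
have n0 : 0 <= `|b| :> int by [].
have n1 : 0 <= `|d| :> int by [].
have hB : 0 < a%:Z * t + b by lra.
have hD : 0 < a%:Z * t + d by lra.
exists (absz (a%:Z * t + b)); exists (absz (a%:Z * t + d)).
split; first by rewrite absz_gt0 gt_eqF.
split; first by rewrite absz_gt0 gt_eqF.
left; split.
  exists t; split; first by rewrite /t addn1.
  split; first by rewrite gt_eqF.
  rewrite -[(`|_|%N)%:R]/((absz (a%:Z * t + b))%:Z)%:~R -[(absz (a%:Z * t + d))%:R]/((absz (a%:Z * t + d))%:Z)%:~R.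
  by rewrite !abszE !ger0_norm // ltW.
split; first by apply: divr_gt0; rewrite ltr0n absz_gt0 gt_eqF.
apply/eqP => E.
have E2 : (absz (a%:Z * t + b))%:R = (absz (a%:Z * t + d))%:R :> rat.
  have nz : (absz (a%:Z * t + d))%:R != 0 :> rat by rewrite pnatr_eq0 absz_eq0 gt_eqF.
  by have := divfK nz ((absz (a%:Z * t + b))%:R); rewrite E mul1r.
move/eqP: E2; rewrite eqr_nat => /eqP /(congr1 Posz).
rewrite !abszE !ger0_norm ?ltW // => /addrI E3.
by rewrite E3 eqxx in bd.
Qed.

Lemma part_iii (a : nat) (b d : int) (p : nat) : (0 < a)%N -> prime p ->
  vlt (vmax (vp p b) (vp p d)) (vp p a%:Z) -> vp p b <> vp p d ->
  colorable (G a b a d) 2 /\ ~ colorable (G a b a d) 1.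
Proof.
move=> a0 pp hv hne.
have [b0 d0 hb hd] := @extract p a b d a0 hv.
have neb : logn p `|b| <> logn p `|d|.
  by move=> E; apply: hne; rewrite /vp (negbTE b0) (negbTE d0) E.
have bd : b != d by apply/eqP => E; apply: neb; rewrite E.
split; last first.
  move=> [f hf]; have [m [n hmn]] := @edge_exists a b d a0 bd.
  by apply: (hf m n hmn); rewrite (ord1 (f m)) (ord1 (f n)).
set k := (logn p `|b| - logn p `|d| + (logn p `|d| - logn p `|b|))%N.
have k0 : (0 < k)%N by rewrite /k; lia.
exists (fun n => Ordinal (ltn_pmod (logn p n %/ k) (isT : (0 < 2)%N))).
have gen : forall x y : nat, x = (y + k)%N -> ((x %/ k) %% 2)%N <> ((y %/ k) %% 2)%N.
  by move=> x y ->; apply: parity_flip.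
move=> m n /edge_eq [m0 n0 [t [hB hD _ hE]]] E; have /= E2 := congr1 val E.
case: hE => hE.
  have L := @edge_logn p a b d m n t pp a0 b0 d0 hb hd m0 n0 hB hD hE.
  have [h|h] := @shift _ _ _ _ neb L.
    exact: gen _ _ h E2.
  exact: gen _ _ h (esym E2).
have L := @edge_logn p a b d n m t pp a0 b0 d0 hb hd n0 m0 hB hD hE.
have [h|h] := @shift _ _ _ _ neb L.
  exact: gen _ _ h (esym E2).
exact: gen _ _ h E2.
Qed.

Definition uu (p n : nat) := (n %/ p ^ logn p n)%N.
Definition hh (p r : nat) := (r %/ p * (p-1) + (r %% p).-1)%N.

Lemma uu_spec p n : prime p -> (0<n)%N -> n = (uu p n * p ^ logn p n)%N /\ coprime p (uu p n).
Proof.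
move=> pp n0; have [m cm E] := pfactor_coprime pp n0.
have -> : uu p n = m by rewrite /uu {1}E mulnK // expn_gt0 prime_gt0.
by [].
Qed.

Lemma hh_lt p s r : prime p -> (r < p ^ s.+1)%N -> (hh p r < p ^ s * (p - 1))%N.
Proof.
move=> pp hr.
have p1 : (1 < p)%N by apply: prime_gt1.
have q : (r %/ p < p ^ s)%N by rewrite ltn_divLR ?prime_gt0 // -expnSr.
have t : ((r %% p).-1 < p - 1)%N.
  have := ltn_pmod r (prime_gt0 pp); lia.
apply: (@leq_trans ((r %/ p).+1 * (p - 1))).
  by rewrite /hh mulSn [X in (_ < X)%N]addnC ltn_add2l.
by rewrite leq_mul2r q orbT.
Qed.

Lemma hh_inj p r1 r2 : prime p -> (r1 %% p != 0)%N -> (r2 %% p != 0)%N -> hh p r1 = hh p r2 -> r1 = r2.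
Proof.
move=> pp h1 h2 E.
have p1 : (0 < p - 1)%N by have := prime_gt1 pp; lia.
have t1 : ((r1 %% p).-1 < p - 1)%N by have := ltn_pmod r1 (prime_gt0 pp); lia.
have t2 : ((r2 %% p).-1 < p - 1)%N by have := ltn_pmod r2 (prime_gt0 pp); lia.
have Q := congr1 (fun x => x %/ (p - 1))%N E.
have M := congr1 (fun x => x %% (p - 1))%N E.
rewrite /hh /= !divnMDl // (divn_small t1) (divn_small t2) !addn0 in Q.
rewrite /hh /= !modnMDl (modn_small t1) (modn_small t2) in M.
rewrite (divn_eq r1 p) (divn_eq r2 p) Q.
congr (_ + _)%N.
by rewrite -(prednK (n := (r1 %% p)%N)) ?lt0n // -(prednK (n := (r2 %% p)%N)) ?lt0n // M.
Qed.

Lemma core_ii (p a : nat) (b d : int) (m n t : nat) : prime p -> (0<a)%N -> b != 0 -> d != 0 ->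
  (logn p `|b| < logn p a)%N -> (logn p `|d| < logn p a)%N ->
  logn p `|b| = logn p `|d| -> b - d != 0 -> (0<m)%N -> (0<n)%N ->
  a%:Z * t + b != 0 -> a%:Z * t + d != 0 ->
  m%:Z*(a%:Z * t + d) = n%:Z*(a%:Z * t + b) ->
  (uu p m %% p ^ (logn p `|b - d|).+1)%N <> (uu p n %% p ^ (logn p `|b - d|).+1)%N.
Proof.
move=> pp a0 b0 d0 hb hd heq bd0 m0 n0 hB hD hE.
set s := logn p `|b - d|.
have L := @edge_logn p a b d m n t pp a0 b0 d0 hb hd m0 n0 hB hD hE.
rewrite heq in L; move/addIn: L => L.
have [Em cm] := @uu_spec p m pp m0.
have [En cn] := @uu_spec p n pp n0.
set um := uu p m in Em cm *; set un := uu p n in En cn *.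
set i := logn p m in Em L; rewrite -L in En.
have hE' : um%:Z * (a%:Z * t + d) = un%:Z * (a%:Z * t + b).
  have pi0 : (p ^ i)%:Z != 0 by rewrite eqz_nat -lt0n expn_gt0 prime_gt0.
  apply: (mulIf pi0).
  move: hE; rewrite {1}Em {1}En !PoszM => hE.
  by rewrite [LHS]mulrAC [RHS]mulrAC.
move=> Emod.
have h1 : ((p ^ s.+1)%:Z %| um%:Z - un%:Z)%Z.
  by rewrite -eqz_mod_dvd !modz_nat Emod.
have h2 : (um%:Z - un%:Z) * (a%:Z * t + d) = un%:Z * (b - d).
  by rewrite mulrBl hE' -mulrBr opprD addrACA subrr add0r.
have h3 : ((p ^ s.+1)%:Z %| un%:Z * (b - d))%Z.
  by rewrite -h2; apply: dvdz_mulr.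
rewrite Gauss_dvdzr in h3; last first.
  by rewrite coprimezE /= coprimeXl.
move: h3; rewrite /dvdz absz_nat -topredE /= pfactor_dvdn ?absz_gt0 // ltnn.
by [].
Qed.

Lemma part_ii (a : nat) (b d : int) (p : nat) : (0 < a)%N -> prime p ->
  vlt (vmax (vp p b) (vp p d)) (vp p a%:Z) -> vp p b = vp p d ->
  colorable_pow (G a b a d) p (vp p (b - d)).
Proof.
move=> a0 pp hv hvv.
have [b0 d0 hb hd] := @extract p a b d a0 hv.
have heq : logn p `|b| = logn p `|d|.
  by move: hvv; rewrite /vp (negbTE b0) (negbTE d0) => -[].
rewrite /colorable_pow /vp; case: (b - d =P 0) => [//|/eqP bd0].
set s := logn p `|b - d|.
have P0 : (0 < p ^ s.+1)%N by rewrite expn_gt0 prime_gt0.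
exists (fun n => Ordinal (@hh_lt p s _ pp (ltn_pmod (uu p n) P0))).
have nz : forall x, (0 < x)%N -> ((uu p x %% p ^ s.+1) %% p != 0)%N.
  move=> x x0; have [_ cx] := @uu_spec p x pp x0.
  rewrite (@modn_dvdm _ _ p) ?dvdn_exp //.
  by move: cx; rewrite prime_coprime.
move=> m n /edge_eq [m0 n0 [t [hB hD _ hE]]] E; have /= E2 := congr1 val E.
have Emod := @hh_inj p _ _ pp (nz m m0) (nz n n0) E2.
case: hE => hE.
  exact: (@core_ii p a b d m n t pp a0 b0 d0 hb hd heq bd0 m0 n0 hB hD hE Emod).
exact: (@core_ii p a b d n m t pp a0 b0 d0 hb hd heq bd0 n0 m0 hB hD hE (esym Emod)).
Qed.

Theorem theorem2p1 (a : nat) (b : int) (c : nat) (d : int) :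
  (0 < a)%N -> (0 < c)%N ->
  (* (i) *)
  (a <> c ->
     forall (R : realType) (alpha beta : R), 1 < alpha -> alpha < beta ->
       (forall q : rat, Rset a b c d q ->
          (beta^-1 < ratr q < alpha^-1) \/ (alpha < ratr q < beta)) ->
       colorable (G a b c d) `|Num.ceil (ln (alpha * beta) / ln alpha)|%N)
  /\
  (* (ii) *)
  (a = c -> forall p : nat, prime p ->
     vlt (vmax (vp p b) (vp p d)) (vp p a%:Z) -> vp p b = vp p d ->
     colorable_pow (G a b c d) p (vp p (b - d)))
  /\
  (* (iii) *)
  (a = c -> forall p : nat, prime p ->
     vlt (vmax (vp p b) (vp p d)) (vp p a%:Z) -> vp p b <> vp p d ->
     colorable (G a b c d) 2 /\ ~ colorable (G a b c d) 1).
Proof.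
move=> a0 c0; split; [|split].
- move=> _ R al be h1 h2 H; exact: part_i.
- move=> ac p pp hv hvv; subst c; exact: (@part_ii a b d p a0 pp hv hvv).
- move=> ac p pp hv hne; subst c; exact: (@part_iii a b d p a0 pp hv hne).
Qed.
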